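(* Let $n\ge 3$ and $q\ge 2$ be integers, $S_1=\sqrt{q^2+4(q-1)(n-2)}$, $S_2=\sqrt{q^2+4(q-1)(n-3)}$. Let $d$ be an integer and define $j$ by $d=n-1-\frac{n-2+j}{q}$, with $j\in\left[\frac{S_1-q}{2},\frac{S_2+q}{2}-1\right)$, and put $s=1-\frac{2d}{n}$. Let $d_0=n-1-\frac{(j-q+1)(n-2)}{qj}$, let $e$ be the unique rational number in $(0,1]$ such that $b:=d_0+e$ is an integer, and define $$f(t)=(t+1)\Big(t-1+\tfrac{2b}{n}\Big)\Big(t-1+\tfrac{2(b-1)}{n}\Big)(t-s)=\sum_{i=0}^4 f_iQ_i^{(n,q)}(t).$$ Provided $f_i\ge 0$ for $i=1,2,3,4$, we have $$A_q(n,s)\le\frac{q^3b(b-1)\big(n(q-1)-j-q+2\big)}{(1-j)q^2b^2+C_1qb-C_2},$$ where $C_1=j(q-1)(2n-1)+j-q$ and $C_2=(q-1)(n-1)[(q-1)(j+1)n+2(j-q+1)]$.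
   Context: $K_i^{(n,q)}(z)=\sum_{l=0}^{i}(-1)^l(q-1)^{i-l}\binom{z}{l}\binom{n-z}{i-l}$, $r_i=(q-1)^i\binom{n}{i}$, $Q_i^{(n,q)}(t)=\frac{1}{r_i}K_i^{(n,q)}\!\big(\tfrac{n(1-t)}{2}\big)$; real polynomials of degree $\le n$ have a unique expansion in the $Q_i^{(n,q)}$. $A_q(n,s)$ is the maximum cardinality of a code $C$ in the $q$-ary Hamming space of length $n$ with $1-\frac{2d(x,y)}{n}\le s$ for all distinct $x,y\in C$, $d$ the Hamming distance. *)

(* Defs.v *)
From HB Require Import structures.
From mathcomp Require Import all_boot all_order all_algebra.
Set Implicit Arguments. Unset Strict Implicit. Unset Printing Implicit Defensive.
Import Order.TTheory GRing.Theory Num.Theory.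
Local Open Scope ring_scope.

Definition word (n q : nat) := {ffun 'I_n -> 'I_q}.

Definition hdist (n q : nat) (x y : word n q) : nat := #|[set i | x i != y i]|.

Definition is_s_code (R : numFieldType) (n q : nat) (s : R) (C : {set word n q}) : bool :=
  [forall x in C, forall y in C,
     (x != y) ==> (1 - 2 * (hdist x y)%:R / n%:R <= s)].

Definition Aq (R : numFieldType) (n q : nat) (s : R) : nat :=
  \max_(C : {set word n q} | is_s_code s C) #|C|.

Definition binpoly (R : fieldType) (p : {poly R}) (l : nat) : {poly R} :=
  (l`!%:R)^-1 *: \prod_(k < l) (p - (k%:R)%:P).

Definition kraw (R : fieldType) (n q i : nat) : {poly R} :=
  \sum_(l < i.+1) (((-1) ^+ l * (q%:R - 1) ^+ (i - l)) *:
     (binpoly 'X l * binpoly ((n%:R)%:P - 'X) (i - l))).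

Definition rcoef (R : fieldType) (n q i : nat) : R := (q%:R - 1) ^+ i * ('C(n, i))%:R.

Definition Qpoly (R : fieldType) (n q i : nat) : {poly R} :=
  (rcoef R n q i)^-1 *: (kraw R n q i \Po ((n%:R / 2)%:P * (1 - 'X))).

(* Main.v *)
Require Import Defs.
From HB Require Import structures.
From mathcomp Require Import all_boot all_order all_algebra.
From mathcomp Require Import ring lra.
Import Order.TTheory GRing.Theory Num.Theory.
Local Open Scope ring_scope.

Set Implicit Arguments. Unset Strict Implicit. Unset Printing Implicit Defensive.

Lemma binR (R : numFieldType) (N l : nat) :
  (l`!%:R : R)^-1 * \prod_(k < l) (N%:R - k%:R) = ('C(N, l))%:R.
Proof.
have fn0 : (l`!%:R : R) != 0 by rewrite pnatr_eq0 -lt0n fact_gt0.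
apply: (canLR (mulKf fn0)).
case: (leqP l N) => hl.
  rewrite -natrM mulnC bin_ffact ffact_prod natr_prod.
  by apply: eq_bigr => k _; rewrite natrB // ltnW // (leq_trans (ltn_ord k)).
rewrite bin_small // mulr0.
rewrite (bigD1 (Ordinal hl)) //= subrr mul0r //.
Qed.

Lemma binpoly_horner (R : fieldType) (p : {poly R}) l x :
  (binpoly p l).[x] = (l`!%:R)^-1 * \prod_(k < l) (p.[x] - k%:R).
Proof.
rewrite /binpoly hornerZ horner_prod; congr (_ * _).
by apply: eq_bigr => k _; rewrite hornerD hornerN hornerC.
Qed.

Lemma coef_1cX (R : comNzRingType) (c : R) N k :
  ((1 + c *: 'X) ^+ N)`_k = c ^+ k *+ 'C(N, k).
Proof.
elim: N k => [|N IH] k.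
  by rewrite expr0 coefE; case: k => [|k] //=; rewrite bin0n ?mulr0n.
rewrite exprS mulrDl mul1r -scalerAl coefD coefZ coefXM IH.
case: k => [|k] /=; first by rewrite !bin0 !expr0 mulr0 addr0.
by rewrite IH binS mulrnDr exprS mulrnAr addrC.
Qed.


Definition kf (R : numFieldType) {q : nat} (a b : 'I_q) : R :=
  if a == b then q%:R - 1 else -1.

Definition Pxy (R : numFieldType) (n q : nat) (x y : word n q) : {poly R} :=
  \prod_(m < n) (1 + kf R (x m) (y m) *: 'X).

Lemma hdist_le n q (x y : word n q) : (hdist x y <= n)%N.
Proof. by rewrite /hdist -[X in (_ <= X)%N]card_ord max_card. Qed.

Lemma Pxy_split (R : numFieldType) n q (x y : word n q) :
  Pxy R x y = (1 + (-1) *: 'X) ^+ (hdist x y) * (1 + (q%:R - 1) *: 'X) ^+ (n - hdist x y).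
Proof.
rewrite /Pxy (bigID (fun m => x m != y m)) /=.
congr (_ * _).
  rewrite (eq_bigr (fun _ => 1 + (-1) *: 'X)); last by move=> m /negbTE; rewrite /kf => ->.
  by rewrite prodr_const /hdist cardsE.
rewrite (eq_bigr (fun _ => 1 + (q%:R - 1) *: 'X)); last by move=> m; rewrite negbK /kf => ->.
rewrite prodr_const; congr (_ ^+ _).
have H := cardC [pred m | x m != y m]; rewrite card_ord in H.
have Hle : (#|[pred m | x m != y m]| <= n)%N by rewrite -[X in (_ <= X)%N]card_ord max_card.
rewrite /hdist cardsE; apply: (@addnI #|[pred m | x m != y m]|).
by rewrite subnKC.
Qed.

Lemma krawA (R : numFieldType) n q i (x y : word n q) :
  (kraw R n q i).[(hdist x y)%:R] = (Pxy R x y)`_i.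
Proof.
rewrite Pxy_split coefM /kraw horner_sum; apply: eq_bigr => l _.
rewrite hornerZ hornerM !binpoly_horner hornerD hornerN !hornerC !hornerX.
rewrite -natrB ?hdist_le // (binR _ (hdist x y) l) (binR _ (n - hdist x y)%N (i - l)%N) !coef_1cX -!(mulr_natr (_ ^+ _)).
by rewrite -!mulrA; congr (_ * _); rewrite mulrCA.
Qed.


Definition psdk (R : numFieldType) (T : Type) (K : T -> T -> R) :=
  exists s : seq (T -> R), forall x y, K x y = \sum_(g <- s) g x * g y.

Lemma psdk_add (R : numFieldType) (T : Type) (K1 K2 : T -> T -> R) :
  psdk K1 -> psdk K2 -> psdk (fun x y => K1 x y + K2 x y).
Proof.
move=> [s1 H1] [s2 H2]; exists (s1 ++ s2) => x y.
by rewrite big_cat H1 H2.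
Qed.

Lemma psdk_mul (R : numFieldType) (T : Type) (K1 K2 : T -> T -> R) :
  psdk K1 -> psdk K2 -> psdk (fun x y => K1 x y * K2 x y).
Proof.
move=> [s1 H1] [s2 H2].
exists [seq (fun w => g w * h w) | g <- s1, h <- s2] => x y.
rewrite big_allpairs_dep H1 H2 mulr_suml; apply: eq_bigr => g _.
rewrite mulr_sumr; apply: eq_bigr => h _; ring.
Qed.

Lemma psdk_ge0 (R : realFieldType) (T : finType) (K : T -> T -> R) (C : {set T}) :
  psdk K -> 0 <= \sum_(x in C) \sum_(y in C) K x y.
Proof.
move=> [s H].
have -> : \sum_(x in C) \sum_(y in C) K x y = \sum_(g <- s) (\sum_(x in C) g x) ^+ 2.
  rewrite (eq_bigr (fun x => \sum_(g <- s) g x * \sum_(y in C) g y)); last first.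
    move=> x _; rewrite (eq_bigr _ (fun y _ => H x y)) exchange_big /=.
    by apply: eq_bigr => g _; rewrite mulr_sumr.
  rewrite exchange_big; apply: eq_bigr => g _; by rewrite expr2 mulr_suml.
by apply: sumr_ge0 => g _; apply: sqr_ge0.
Qed.

Lemma sum_eqb (R : numFieldType) q (a : 'I_q) :
  \sum_(c < q) ((a == c)%:R : R) = 1.
Proof.
rewrite (bigD1 a) //= eqxx big1 ?addr0 // => c /negbTE; by rewrite eq_sym => ->.
Qed.

Lemma sum_eqb2 (R : numFieldType) q (a b : 'I_q) :
  \sum_(c < q) ((a == c)%:R * (b == c)%:R : R) = (a == b)%:R.
Proof.
rewrite (bigD1 a) //= eqxx mul1r big1 ?addr0 ?(eq_sym b a) // => c /negbTE.
by rewrite eq_sym => ->; rewrite mul0r.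
Qed.

Lemma psdk_kf (R : rcfType) n q (m : 'I_n) (qpos : (0 < q)%N) :
  psdk (fun x y : word n q => kf R (x m) (y m)).
Proof.
have q0 : (q%:R : R) != 0 by rewrite pnatr_eq0 -lt0n.
exists [seq (fun w : word n q => Num.sqrt q%:R * ((w m == c)%:R - q%:R^-1)) | c <- enum 'I_q].
move=> x y; rewrite big_map big_enum /=.
have sq : Num.sqrt (q%:R : R) ^+ 2 = q%:R by rewrite sqr_sqrtr // ler0n.
rewrite (eq_bigr (fun c => q%:R * ((x m == c)%:R * (y m == c)%:R) - (x m == c)%:R - (y m == c)%:R + q%:R^-1)); last first.
  by move=> c _; rewrite mulrACA -expr2 sq; field.
rewrite (eq_bigl (fun _ => true)) // big_split /= !sumrB -mulr_sumr sum_eqb2 !sum_eqb.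
rewrite sumr_const card_ord -(mulr_natr (q%:R^-1)) mulVf // /kf.
by case: eqP => _; rewrite ?mulr1 ?mulr0 /=; ring.
Qed.

Lemma psdk_ext (R : numFieldType) (T : Type) (K1 K2 : T -> T -> R) :
  psdk K1 -> (forall x y, K1 x y = K2 x y) -> psdk K2.
Proof. by move=> [s H] E; exists s => x y; rewrite -E. Qed.

Lemma psdk_prod (R : rcfType) n q (qpos : (0 < q)%N) (r : seq 'I_n) i :
  psdk (fun x y : word n q => (\prod_(m <- r) (1 + kf R (x m) (y m) *: 'X))`_i).
Proof.
elim: r i => [|m r IH] i.
  exists (if i == 0%N then [:: fun _ => 1] else [::]) => x y.
  rewrite big_nil coefE; case: i => [|i] /=; first by rewrite big_cons big_nil mulr1 addr0.
  by rewrite big_nil.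
have H : psdk (fun x y : word n q => (\prod_(m <- r) (1 + kf R (x m) (y m) *: 'X))`_i
   + (if i is i'.+1 then kf R (x m) (y m) * (\prod_(m <- r) (1 + kf R (x m) (y m) *: 'X))`_i' else 0)).
  case: i => [|i].
    by apply: psdk_ext (IH 0%N) _ => x y; rewrite addr0.
  by apply: psdk_add; [apply: IH | apply: psdk_mul; [apply: psdk_kf | apply: IH]].
apply: psdk_ext H _ => x y.
rewrite big_cons mulrDl mul1r -scalerAl coefD coefZ coefXM.
by case: i => [|i] /=; rewrite ?mulr0.
Qed.

Lemma Pxy_psd (R : rcfType) n q (qpos : (0 < q)%N) i (C : {set word n q}) :
  0 <= \sum_(x in C) \sum_(y in C) (Pxy R x y)`_i.
Proof. by apply: psdk_ge0; apply: psdk_prod. Qed.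


Lemma sum_kf (R : numFieldType) q (c : 'I_q) : \sum_(a < q) kf R c a = 0.
Proof.
rewrite (eq_bigr (fun a => q%:R * (c == a)%:R - 1)); last first.
  by move=> a _; rewrite /kf; case: eqP => _; rewrite ?mulr1 ?mulr0 ?sub0r.
by rewrite sumrB -mulr_sumr sum_eqb mulr1 sumr_const card_ord subrr.
Qed.

Lemma sumPxy (R : numFieldType) n q (x : word n q) :
  \sum_(y : word n q) Pxy R x y = (q%:R ^+ n)%:P.
Proof.
rewrite /Pxy -(bigA_distr_bigA (fun m a => 1 + kf R (x m) a *: 'X)) /=.
rewrite (eq_bigr (fun _ => (q%:R)%:P)); last first.
  move=> m _; rewrite big_split /= -scaler_suml sum_kf scale0r addr0.
  by rewrite sumr_const card_ord polyC_natr.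
by rewrite prodr_const card_ord rmorphXn.
Qed.

Definition Gxy (R : numFieldType) n q (x y : word n q) : {poly R} :=
  \prod_(m < n) (1 + ((x m != y m)%:R : R) *: 'X).

Lemma Gxy_split (R : numFieldType) n q (x y : word n q) :
  Gxy R x y = (1 + 1 *: 'X) ^+ (hdist x y).
Proof.
rewrite /Gxy (bigID (fun m => x m != y m)) /=.
rewrite [X in _ * X]big1 ?mulr1; last by move=> m; rewrite negbK => ->; rewrite scale0r addr0.
rewrite (eq_bigr (fun _ => 1 + 1 *: 'X)); last by move=> m ->.
by rewrite prodr_const /hdist cardsE.
Qed.

Lemma sum_binom (R : numFieldType) n q (x : word n q) k (qpos : (0 < q)%N) :
  (\sum_(y : word n q) ('C(hdist x y, k))%:R) * (q%:R : R) ^+ k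
  = ('C(n, k))%:R * (q%:R - 1) ^+ k * q%:R ^+ n.
Proof.
have q0 : (q%:R : R) != 0 by rewrite pnatr_eq0 -lt0n.
have E : forall y, ('C(hdist x y, k))%:R = (Gxy R x y)`_k :> R.
  by move=> y; rewrite Gxy_split coef_1cX expr1n.
rewrite (eq_bigr _ (fun y _ => E y)) -coef_sum /Gxy.
rewrite -(bigA_distr_bigA (fun m a => 1 + ((x m != a)%:R : R) *: 'X)) /=.
rewrite (eq_bigr (fun _ => q%:R *: (1 + ((q%:R - 1) / q%:R) *: 'X))); last first.
  move=> m _; rewrite big_split /= -scaler_suml sumr_const card_ord.
  rewrite (eq_bigr (fun a => 1 - ((x m == a)%:R : R))); last by move=> a _; case: eqP => _ /=; rewrite ?subr0 ?subrr.
  rewrite sumrB sum_eqb sumr_const card_ord scalerDr scalerA mulrCA mulfV // mulr1.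
  by rewrite -scaler_nat.
rewrite prodr_const card_ord exprZn coefZ coef_1cX expr_div_n.
rewrite -mulr_natr; field; by rewrite mul1r expf_neq0.
Qed.


Definition tt (R : numFieldType) n q (x y : word n q) : R := 1 - 2 * (hdist x y)%:R / n%:R.

Lemma Qeval (R : numFieldType) n q i (x y : word n q) (n0 : (0 < n)%N) :
  (Qpoly R n q i).[tt R x y] = (rcoef R n q i)^-1 * (Pxy R x y)`_i.
Proof.
have nR0 : (n%:R : R) != 0 by rewrite pnatr_eq0 -lt0n.
rewrite /Qpoly hornerZ horner_comp -krawA; congr (_ * (_).[_]).
rewrite hornerCM !hornerE /tt; field; exact: nR0.
Qed.

Lemma Pxy0 (R : numFieldType) n q (x y : word n q) : (Pxy R x y)`_0 = 1.
Proof.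
rewrite -horner_coef0 /Pxy horner_prod big1 // => m _.
by rewrite !hornerE.
Qed.

Lemma rcoef0 (R : numFieldType) n q : rcoef R n q 0 = 1.
Proof. by rewrite /rcoef expr0 bin0 mul1r. Qed.

Lemma rcoef_ge0 (R : numFieldType) n q i (qpos : (0 < q)%N) : 0 <= rcoef R n q i.
Proof.
rewrite /rcoef mulr_ge0 ?ler0n // exprn_ge0 // subr_ge0 ler1n //.
Qed.

Lemma f_expand (R : numFieldType) n q (fc : 'I_5 -> R) (f : {poly R}) (n0 : (0 < n)%N) (x y : word n q) :
  f = \sum_(i < 5) fc i *: Qpoly R n q i ->
  f.[tt R x y] = fc ord0 + \sum_(i < 4) fc (lift ord0 i) * ((rcoef R n q (lift ord0 i))^-1 * (Pxy R x y)`_(lift ord0 i)).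
Proof.
move=> ->; rewrite horner_sum big_ord_recl /= hornerZ Qeval // Pxy0 rcoef0 invr1 !mulr1.
by congr (_ + _); apply: eq_bigr => i _; rewrite hornerZ Qeval.
Qed.

Lemma LP_lower (R : rcfType) n q (fc : 'I_5 -> R) (f : {poly R}) (n0 : (0 < n)%N) (qpos : (0 < q)%N) :
  f = \sum_(i < 5) fc i *: Qpoly R n q i ->
  (forall i : 'I_5, (0 < i)%N -> 0 <= fc i) ->
  forall C : {set word n q},
  fc ord0 * (#|C|%:R) ^+ 2 <= \sum_(x in C) \sum_(y in C) f.[tt R x y].
Proof.
move=> Hf Hfc C.
rewrite (eq_bigr (fun x => \sum_(y in C) (fc ord0 + \sum_(i < 4) fc (lift ord0 i) * ((rcoef R n q (lift ord0 i))^-1 * (Pxy R x y)`_(lift ord0 i))))); last first.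
  by move=> x _; apply: eq_bigr => y _; rewrite (f_expand _ _ _ Hf).
rewrite (eq_bigr (fun x => #|C|%:R * fc ord0 + \sum_(y in C) \sum_(i < 4) fc (lift ord0 i) * ((rcoef R n q (lift ord0 i))^-1 * (Pxy R x y)`_(lift ord0 i)))); last first.
  by move=> x _; rewrite big_split /= sumr_const mulr_natl.
rewrite big_split /= sumr_const -(mulr_natr (_ * _)).
have -> : #|C|%:R * fc ord0 * #|C|%:R = fc ord0 * #|C|%:R ^+ 2 :> R by ring.
rewrite lerDl.
rewrite exchange_big /=.
rewrite (eq_bigr (fun y => \sum_(i < 4) \sum_(i0 in C) fc (lift ord0 i) * ((rcoef R n q (bump 0 i))^-1 * (Pxy R i0 y)`_(bump 0 i)))); last by move=> y _; rewrite exchange_big.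
rewrite exchange_big /=; apply: sumr_ge0 => i _.
rewrite exchange_big /=.
rewrite (eq_bigr (fun x => fc (lift ord0 i) * (rcoef R n q (bump 0 i))^-1 * \sum_(y in C) (Pxy R x y)`_(bump 0 i))); last first.
  by move=> x _; rewrite mulr_sumr; apply: eq_bigr => y _; rewrite mulrA.
rewrite -mulr_sumr; apply: mulr_ge0; last exact: Pxy_psd.
apply: mulr_ge0; first by apply: Hfc.
by rewrite invr_ge0 rcoef_ge0.
Qed.

Lemma LP_total (R : rcfType) n q (fc : 'I_5 -> R) (f : {poly R}) (n0 : (0 < n)%N) (qpos : (0 < q)%N) :
  f = \sum_(i < 5) fc i *: Qpoly R n q i ->
  forall x : word n q, \sum_(y : word n q) f.[tt R x y] = fc ord0 * q%:R ^+ n.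
Proof.
move=> Hf x.
rewrite (eq_bigr (fun y => fc ord0 + \sum_(i < 4) fc (lift ord0 i) * ((rcoef R n q (lift ord0 i))^-1 * (Pxy R x y)`_(lift ord0 i)))); last first.
  by move=> y _; rewrite (f_expand _ _ _ Hf).
rewrite big_split /= sumr_const.
rewrite exchange_big big1 ?addr0 /=; last first.
  move=> i _; rewrite -mulr_sumr -mulr_sumr -coef_sum sumPxy coefC /=.
  by rewrite !mulr0.
by rewrite card_ffun !card_ord -(mulr_natr (fc ord0)) natrX.
Qed.

Lemma hdist0 n q (x : word n q) : hdist x x = 0%N.
Proof. by rewrite /hdist; apply/eqP; rewrite cards_eq0; apply/eqP/setP => i; rewrite !inE eqxx. Qed.

Lemma LP_upper (R : numFieldType) n q (f : {poly R}) (C : {set word n q}) :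
  (forall x y, x \in C -> y \in C -> x != y -> f.[tt R x y] <= 0) ->
  \sum_(x in C) \sum_(y in C) f.[tt R x y] <= #|C|%:R * f.[1].
Proof.
move=> H; rewrite mulr_natl -(sumr_const (mem C)); apply: ler_sum => x xC.
rewrite (bigD1 x) //= {1}/tt hdist0 mulr0 mul0r subr0 -[X in _ <= X]addr0 lerD2l.
rewrite -oppr_ge0 -sumrN; apply: sumr_ge0 => y /andP [yC yx]; rewrite oppr_ge0.
by apply: H => //; rewrite eq_sym.
Qed.


Definition hh (R : numFieldType) (n b d m : R) := (n - m) * (b - m) * (b - 1 - m) * (d - m).
Definition ak0 (R : numFieldType) (n b d : R) := hh n b d 0.
Definition ak1 (R : numFieldType) (n b d : R) := hh n b d 1 - hh n b d 0.
Definition ak2 (R : numFieldType) (n b d : R) := hh n b d 2 - 2 * hh n b d 1 + hh n b d 0.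
Definition ak3 (R : numFieldType) (n b d : R) :=
  hh n b d 3 - 3 * hh n b d 2 + 3 * hh n b d 1 - hh n b d 0.
Definition ak4 (R : numFieldType) (n b d : R) :=
  hh n b d 4 - 4 * hh n b d 3 + 6 * hh n b d 2 - 4 * hh n b d 1 + hh n b d 0.

Definition B2 (R : numFieldType) (z : R) := z * (z - 1) / 2.
Definition B3 (R : numFieldType) (z : R) := z * (z - 1) * (z - 2) / 6.
Definition B4 (R : numFieldType) (z : R) := z * (z - 1) * (z - 2) * (z - 3) / 24.

Lemma B2E (R : numFieldType) N : ('C(N, 2))%:R = B2 (N%:R : R).
Proof. rewrite -binR !big_ord_recr big_ord0 /= /B2 (_ : 2`! = 2)%N //; by field. Qed.
Lemma B3E (R : numFieldType) N : ('C(N, 3))%:R = B3 (N%:R : R).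
Proof. rewrite -binR !big_ord_recr big_ord0 /= /B3 (_ : 3`! = 6)%N //; by field. Qed.
Lemma B4E (R : numFieldType) N : ('C(N, 4))%:R = B4 (N%:R : R).
Proof. rewrite -binR !big_ord_recr big_ord0 /= /B4 (_ : 4`! = 24)%N //; by field. Qed.

Lemma hexp (R : numFieldType) (n b d z : R) :
  (n - z) * (b - z) * (b - 1 - z) * (d - z) =
  ak0 n b d + ak1 n b d * z + ak2 n b d * B2 z + ak3 n b d * B3 z + ak4 n b d * B4 z.
Proof. rewrite /ak0 /ak1 /ak2 /ak3 /ak4 /hh /B2 /B3 /B4; by field. Qed.

Lemma final_id (R : numFieldType) (n q b d : R) (n0 : n != 0) (q0 : q != 0) :
  let j := q * (n - 1 - d) - (n - 2) in
  let C1 := j * (q - 1) * (2 * n - 1) + j - q in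
  let C2 := (q - 1) * (n - 1) * ((q - 1) * (j + 1) * n + 2 * (j - q + 1)) in
  16 / n ^+ 4 * (ak0 n b d + ak1 n b d * (n * (q - 1) / q)
     + ak2 n b d * (B2 n * (q - 1) ^+ 2 / q ^+ 2)
     + ak3 n b d * (B3 n * (q - 1) ^+ 3 / q ^+ 3)
     + ak4 n b d * (B4 n * (q - 1) ^+ 4 / q ^+ 4)) * q ^+ 4 * n ^+ 3
  = 16 * ((1 - j) * q ^+ 2 * b ^+ 2 + C1 * q * b - C2).
Proof.
move=> j C1 C2; rewrite /C1 /C2 /j /ak0 /ak1 /ak2 /ak3 /ak4 /hh /B2 /B3 /B4; field; by rewrite q0 n0.
Qed.

Lemma den_id (R : numFieldType) (n q b j : R) (q0 : q != 0) (j0 : j != 0) :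
  let C1 := j * (q - 1) * (2 * n - 1) + j - q in
  let C2 := (q - 1) * (n - 1) * ((q - 1) * (j + 1) * n + 2 * (j - q + 1)) in
  let d0 := n - 1 - (j - q + 1) * (n - 2) / (q * j) in
  let e := b - d0 in
  let A := (q - 1) * (n - 2) in
  let X := A + q * j - j ^+ 2 in
  ((1 - j) * q ^+ 2 * b ^+ 2 + C1 * q * b - C2) * (q * j) ^+ 2 =
  q ^+ 2 * ((1 - e) * (q - 1) * (j + 1) * (n - 2) * X + e * X * ((j + 1) * A + 2 * q * j))
  + q ^+ 4 * j ^+ 2 * (j - 1) * e * (1 - e).
Proof.
move=> C1 C2 d0 e A X; rewrite /X /A /e /d0 /C1 /C2; field; by rewrite q0 j0.
Qed.

Lemma den_pos (R : realFieldType) (n q b j : R) :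
  2 <= q -> 3 <= n -> 1 <= j ->
  let C1 := j * (q - 1) * (2 * n - 1) + j - q in
  let C2 := (q - 1) * (n - 1) * ((q - 1) * (j + 1) * n + 2 * (j - q + 1)) in
  let d0 := n - 1 - (j - q + 1) * (n - 2) / (q * j) in
  0 < (q - 1) * (n - 2) + q * j - j ^+ 2 ->
  0 < b - d0 -> b - d0 <= 1 ->
  0 < (1 - j) * q ^+ 2 * b ^+ 2 + C1 * q * b - C2.
Proof.
move=> hq hn hj C1 C2 d0 hX he1 he2.
have q0 : q != 0 by apply/negP => /eqP q0; rewrite q0 in hq; lra.
have j0 : j != 0 by apply/negP => /eqP j0; rewrite j0 in hj; lra.
have qj : 0 < (q * j) ^+ 2 by rewrite exprn_gt0 // mulr_gt0 //; lra.
rewrite -(pmulr_lgt0 _ qj) (den_id n b q0 j0) /=.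
move: hX he1 he2; set e := b - d0; set X := (q - 1) * (n - 2) + q * j - j ^+ 2 => hX he1 he2.
have h1 : 0 <= (1 - e) * (q - 1) * (j + 1) * (n - 2) * X.
  apply: mulr_ge0; last lra.
  apply: mulr_ge0; last lra.
  apply: mulr_ge0; last lra.
  apply: mulr_ge0; lra.
have h2 : 0 < e * X * ((j + 1) * ((q - 1) * (n - 2)) + 2 * q * j).
  apply: mulr_gt0; first by apply: mulr_gt0.
  have : 0 < (j + 1) * ((q - 1) * (n - 2)) by apply: mulr_gt0; [lra | apply: mulr_gt0; lra].
  have : 0 < 2 * q * j by apply: mulr_gt0; [apply: mulr_gt0 |]; lra.
  lra.
have h3 : 0 <= q ^+ 4 * j ^+ 2 * (j - 1) * e * (1 - e).
  apply: mulr_ge0; last lra.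
  apply: mulr_ge0; last lra.
  apply: mulr_ge0; last lra.
  apply: mulr_ge0; apply: exprn_ge0; lra.
have h4 : 0 < q ^+ 2 by apply: exprn_gt0; lra.
have : 0 < q ^+ 2 * ((1 - e) * (q - 1) * (j + 1) * (n - 2) * X +
    e * X * ((j + 1) * ((q - 1) * (n - 2)) + 2 * q * j)).
  by apply: mulr_gt0 => //; lra.
lra.
Qed.


Lemma f_eval (R : numFieldType) (n b d z : R) (n0 : n != 0) :
  (('X + 1) * ('X + (-1 + 2 * b / n)%:P) * ('X + (-1 + 2 * (b - 1) / n)%:P)
    * ('X - (1 - 2 * d / n)%:P)).[1 - 2 * z / n]
  = 16 / n ^+ 4 * ((n - z) * (b - z) * (b - 1 - z) * (d - z)).
Proof. rewrite !hornerM !hornerD hornerN !hornerX !hornerC; field; by rewrite n0. Qed.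

Lemma int_consec (R : realDomainType) (w : int) : 0 <= (w%:~R : R) * (w%:~R - 1).
Proof.
case: (lerP 1 w) => hw.
  by apply: mulr_ge0; [rewrite ler0z; apply: le_trans hw | rewrite subr_ge0 ler1z].
apply: mulr_le0; first by rewrite lerz0 -ltzD1.
rewrite subr_le0; apply: le_trans (_ : (w%:~R : R) <= 0) _; last by [].
by rewrite lerz0 -ltzD1.
Qed.

Lemma code_pair (R : numFieldType) n q (s : R) (C : {set word n q}) x y :
  is_s_code s C -> x \in C -> y \in C -> x != y -> 1 - 2 * (hdist x y)%:R / n%:R <= s.
Proof.
move=> /forall_inP/(_ x) H xC yC; move: (H xC) => /forall_inP/(_ y yC)/implyP; apply.
Qed.


Unset Implicit Arguments. Set Strict Implicit. Set Printing Implicit Defensive.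

Theorem theorem5 (R : rcfType) (n q : nat) (d b : int) (fc : 'I_5 -> R) :
  (3 <= n)%N -> (2 <= q)%N ->
  let nR : R := n%:R in
  let qR : R := q%:R in
  let S1 : R := Num.sqrt (qR ^+ 2 + 4 * (qR - 1) * (nR - 2)) in
  let S2 : R := Num.sqrt (qR ^+ 2 + 4 * (qR - 1) * (nR - 3)) in
  let j : R := qR * (nR - 1 - d%:~R) - (nR - 2) in
  (S1 - qR) / 2 <= j -> j < (S2 + qR) / 2 - 1 ->
  let s : R := 1 - 2 * d%:~R / nR in
  let d0 : R := nR - 1 - (j - qR + 1) * (nR - 2) / (qR * j) in
  0 < b%:~R - d0 -> b%:~R - d0 <= 1 ->
  let bR : R := b%:~R in
  let f : {poly R} :=
    ('X + 1) * ('X + (-1 + 2 * bR / nR)%:P) * ('X + (-1 + 2 * (bR - 1) / nR)%:P)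
    * ('X - s%:P) in
  f = \sum_(i < 5) fc i *: Qpoly R n q i ->
  (forall i : 'I_5, (0 < i)%N -> 0 <= fc i) ->
  let C1 : R := j * (qR - 1) * (2 * nR - 1) + j - qR in
  let C2 : R := (qR - 1) * (nR - 1) * ((qR - 1) * (j + 1) * nR + 2 * (j - qR + 1)) in
  (Aq n q s)%:R <=
    qR ^+ 3 * bR * (bR - 1) * (nR * (qR - 1) - j - qR + 2) /
    ((1 - j) * qR ^+ 2 * bR ^+ 2 + C1 * qR * bR - C2).
Proof.
move=> Hn Hq nR qR S1 S2 j Hj1 Hj2 s d0 He1 He2 bR f Hf Hfc; cbv zeta beta.
set C1 := j * (qR - 1) * (2 * nR - 1) + j - qR.
set C2 := (qR - 1) * (nR - 1) * ((qR - 1) * (j + 1) * nR + 2 * (j - qR + 1)).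
have n0 : (0 < n)%N by apply: leq_trans Hn.
have qpos : (0 < q)%N by apply: leq_trans Hq.
have nR3 : 3 <= nR by rewrite /nR ler_nat.
have qR2 : 2 <= qR by rewrite /qR ler_nat.
have nR0 : nR != 0 by rewrite /nR pnatr_eq0 -lt0n.
have qR0 : qR != 0 by rewrite /qR pnatr_eq0 -lt0n.
have A0 : 0 < (qR - 1) * (nR - 2) by apply: mulr_gt0; lra.
have S1sq : S1 ^+ 2 = qR ^+ 2 + 4 * (qR - 1) * (nR - 2).
  by rewrite /S1 sqr_sqrtr //; nra.
have S1ge0 : 0 <= S1 by rewrite /S1 sqrtr_ge0.
have S2le : S2 <= S1 by rewrite /S2 /S1; apply: ler_wsqrtr; nra.
have qS1 : qR < S1 by nra.
have jpos : 0 < j by lra.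
have jE : j = (q%:Z * (n%:Z - 1 - d) - (n%:Z - 2))%:~R.
  by rewrite /j /qR /nR !(intrB, intrM).
have j1 : 1 <= j.
  by move: jpos; rewrite jE ltr0z ler1z.
have Xpos : 0 < (qR - 1) * (nR - 2) + qR * j - j ^+ 2.
  have h1 : 0 < S1 - (2 * j - qR) by lra.
  have h2 : 0 < S1 + (2 * j - qR) by lra.
  have := mulr_gt0 h1 h2; nra.
have denpos : 0 < (1 - j) * qR ^+ 2 * bR ^+ 2 + C1 * qR * bR - C2.
  exact: (den_pos qR2 nR3 j1 Xpos He1 He2).
pose x0 : word n q := [ffun => Ordinal qpos].
have Htot := LP_total n0 qpos Hf x0.
pose dR : R := d%:~R.
have Hh : forall y : word n q, f.[tt R x0 y] = 16 / nR ^+ 4 *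
   (ak0 nR bR dR + ak1 nR bR dR * ('C(hdist x0 y, 1))%:R + ak2 nR bR dR * ('C(hdist x0 y, 2))%:R
    + ak3 nR bR dR * ('C(hdist x0 y, 3))%:R + ak4 nR bR dR * ('C(hdist x0 y, 4))%:R).
  by move=> y; rewrite /f /s /tt f_eval // hexp bin1 B2E B3E B4E.
pose M k := \sum_(y : word n q) (('C(hdist x0 y, k))%:R : R).
have Hsum : fc ord0 * qR ^+ n = 16 / nR ^+ 4 * (ak0 nR bR dR * qR ^+ n + ak1 nR bR dR * M 1%N
   + ak2 nR bR dR * M 2%N + ak3 nR bR dR * M 3%N + ak4 nR bR dR * M 4%N).
  rewrite -Htot (eq_bigr _ (fun y _ => Hh y)) -mulr_sumr; congr (_ * _).
  rewrite !big_split /= sumr_const -!mulr_sumr card_ffun !card_ord.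
  by rewrite -(mulr_natr (ak0 nR bR dR)) natrX.
have Mk : forall k, M k = ('C(n, k))%:R * (qR - 1) ^+ k * qR ^+ n / qR ^+ k.
  move=> k; rewrite -(sum_binom R x0 k qpos) mulfK //; exact: expf_neq0.
have Hfc0 : fc ord0 = 16 / nR ^+ 4 * (ak0 nR bR dR + ak1 nR bR dR * (nR * (qR - 1) / qR)
     + ak2 nR bR dR * (B2 nR * (qR - 1) ^+ 2 / qR ^+ 2)
     + ak3 nR bR dR * (B3 nR * (qR - 1) ^+ 3 / qR ^+ 3)
     + ak4 nR bR dR * (B4 nR * (qR - 1) ^+ 4 / qR ^+ 4)).
  apply: (mulIf (expf_neq0 n qR0)); rewrite Hsum !Mk bin1 B2E B3E B4E -/nR.
  set Q := qR ^+ n; field; by rewrite qR0 nR0.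
have Hfc0' : fc ord0 * qR ^+ 4 * nR ^+ 3 = 16 * ((1 - j) * qR ^+ 2 * bR ^+ 2 + C1 * qR * bR - C2).
  by rewrite Hfc0; apply: (final_id bR dR nR0 qR0).
set den := (1 - j) * qR ^+ 2 * bR ^+ 2 + C1 * qR * bR - C2.
have qn0 : 0 < qR ^+ 4 * nR ^+ 3 by apply: mulr_gt0; apply: exprn_gt0; lra.
have fc0pos : 0 < fc ord0.
  have : 0 < fc ord0 * (qR ^+ 4 * nR ^+ 3) by rewrite mulrA Hfc0'; apply: mulr_gt0 => //; lra.
  by rewrite pmulr_lgt0.
have f1 : f.[1] = 16 / nR ^+ 4 * (nR * bR * (bR - 1) * dR).
  have := f_eval bR dR 0 nR0; rewrite mulr0 mul0r subr0 !subr0 => <-.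
  by rewrite /f /s.
set RHS := qR ^+ 3 * bR * (bR - 1) * (nR * (qR - 1) - j - qR + 2) / den.
have key : RHS * fc ord0 = f.[1].
  have den0 : den != 0 by rewrite gt_eqF.
  have -> : fc ord0 = 16 * den / (qR ^+ 4 * nR ^+ 3).
    by rewrite -Hfc0' -mulrA mulfK // gt_eqF.
  rewrite f1 /RHS /j /dR; field; by rewrite den0 qR0 nR0.
have fneg : forall (C : {set word n q}), is_s_code s C ->
    forall x y, x \in C -> y \in C -> x != y -> f.[tt R x y] <= 0.
  move=> C HC x y xC yC xy.
  have Hc := code_pair HC xC yC xy.
  have zn : (hdist x y)%:R <= nR by rewrite /nR ler_nat hdist_le.
  have dz : dR <= (hdist x y)%:R.
    move: Hc; rewrite /s lerD2l lerN2 -!mulrA ler_pM2l // ler_pM2r ?invr_gt0 //; lra.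
  have P0 : 0 <= (bR - (hdist x y)%:R) * (bR - 1 - (hdist x y)%:R).
    have := int_consec R (b - (hdist x y)%:Z).
    by rewrite intrB /= (_ : bR - 1 - (hdist x y)%:R = bR - (hdist x y)%:R - 1) //; ring.
  rewrite /f /s /tt f_eval // -/dR.
  apply: mulr_ge0_le0; first by apply: divr_ge0; [lra | apply: exprn_ge0; lra].
  set z := (hdist x y)%:R; move: P0 zn dz; rewrite -/z => P0 zn dz.
  have -> : (nR - z) * (bR - z) * (bR - 1 - z) * (dR - z) = ((nR - z) * ((bR - z) * (bR - 1 - z))) * (dR - z) by ring.
  apply: mulr_ge0_le0; last lra.
  apply: mulr_ge0; lra.
have Hcode : forall C : {set word n q}, (forall x y, x \in C -> y \in C -> x != y -> f.[tt R x y] <= 0) ->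
    fc ord0 * #|C|%:R ^+ 2 <= #|C|%:R * (RHS * fc ord0).
  move=> C HC; rewrite key; apply: le_trans (LP_lower n0 qpos Hf Hfc C) _.
  exact: LP_upper.
have RHS1 : 1 <= RHS.
  have h : fc ord0 * #|[set x0]|%:R ^+ 2 <= #|[set x0]|%:R * (RHS * fc ord0).
    apply: Hcode => x y; rewrite !inE => /eqP -> /eqP ->; by rewrite eqxx.
  move: h; rewrite cards1 expr1n mul1r mulr1 -[X in X <= _]mul1r ler_pM2r //.
rewrite /Aq; apply: (big_ind (fun m : nat => m%:R <= RHS)).
- lra.
- move=> m1 m2 h1 h2; rewrite /maxn; by case: ifP.
move=> C HC.
have := Hcode C (fneg C HC).
case: (posnP #|C|) => [-> _| Cpos]; first lra.
have cpos : 0 < (#|C|%:R : R) by rewrite ltr0n.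
rewrite (_ : #|C|%:R * (RHS * fc ord0) = #|C|%:R * (fc ord0 * RHS)); last by ring.
by rewrite expr2 mulrCA ler_pM2l // ler_pM2l.
Qed.
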